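(* Let $1,2,3,4$ be four distinct vertices of $G$ such that $G[\{1,2,3,4\}]$ has edge set exactly $\{12,23,34\}$. If $\Gamma_G$ is population monotonic, then $w_{23}\ge w_{12}+w_{34}$.
   Context: $G=(V,E;w)$ is a finite simple graph with edge weights $w:E\to\mathbb{R}$, $w_e>0$ for all $e\in E$; $w_{ij}$ denotes the weight of edge $ij$. The matching game on $G$ is the cooperative game $\Gamma_G=(N,\gamma)$ with player set $N=V$ and, for $S\subseteq N$, $\gamma(S)$ equal to the maximum weight of a matching in the induced subgraph $G[S]$ (so $\gamma(\emptyset)=0$). A population monotonic allocation scheme (PMAS) is a family $(\boldsymbol{x}_S)_{\emptyset\neq S\subseteq N}$ with $\boldsymbol{x}_S=(x_{S,i})_{i\in S}\in\mathbb{R}^S$ such that (efficiency) $\sum_{i\in S}x_{S,i}=\gamma(S)$ for every nonempty $S\subseteq N$, and (monotonicity) $x_{S,i}\le x_{T,i}$ whenever $\emptyset\ne S\subseteq T\subseteq N$ and $i\in S$. $\Gamma_G$ is called population monotonic if it admits a PMAS. *)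

(* Defs.v *)
From mathcomp Require Import all_boot all_order all_algebra.
Set Implicit Arguments. Unset Strict Implicit. Unset Printing Implicit Defensive.
Import Order.TTheory GRing.Theory Num.Theory.
Local Open Scope ring_scope.

(* A finite simple graph on vertex type V : finType is a symmetric irreflexive
   relation e; edge weights are w : V -> V -> R, symmetric and positive on edges
   (values off edges are irrelevant). *)
Definition simple_graph (V : finType) (e : rel V) : Prop :=
  (forall x, ~~ e x x) /\ (forall x y, e x y = e y x).

Definition edge_weights (R : realFieldType) (V : finType) (e : rel V)
  (w : V -> V -> R) : Prop :=
  (forall x y, w x y = w y x) /\ (forall x y, e x y -> 0 < w x y).

(* A matching in G[S], represented as a set of oriented edges (x,y); pairwise
   vertex-disjointness forces each edge to appear with one orientation only. *)
Definition is_matching (V : finType) (e : rel V) (S : {set V})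
  (M : {set V * V}) : bool :=
  [forall p in M, [&& p.1 \in S, p.2 \in S & e p.1 p.2]] &&
  [forall p in M, forall q in M,
     (p != q) ==> [disjoint [set p.1; p.2] & [set q.1; q.2]]].

Definition matching_weight (R : realFieldType) (V : finType)
  (w : V -> V -> R) (M : {set V * V}) : R :=
  \sum_(p in M) w p.1 p.2.

(* gamma(S) = maximum weight of a matching in G[S] (the empty matching has
   weight 0, so 0 is a correct neutral element). *)
Definition gamma (R : realFieldType) (V : finType) (e : rel V)
  (w : V -> V -> R) (S : {set V}) : R :=
  \big[Num.max/0]_(M : {set V * V} | is_matching e S M) matching_weight w M.

(* Population monotonic allocation scheme: x S i is x_{S,i}
   (only values with S nonempty and i in S are meaningful). *)
Definition is_PMAS (R : realFieldType) (V : finType) (e : rel V)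
  (w : V -> V -> R) (x : {set V} -> V -> R) : Prop :=
  (forall S : {set V}, S != set0 -> \sum_(i in S) x S i = gamma e w S) /\
  (forall (S T : {set V}) (i : V), S != set0 -> S \subset T -> i \in S ->
     x S i <= x T i).

Definition population_monotonic (R : realFieldType) (V : finType) (e : rel V)
  (w : V -> V -> R) : Prop :=
  exists x : {set V} -> V -> R, is_PMAS e w x.

(* Main.v *)
Require Import Defs.
From mathcomp Require Import all_boot all_order all_algebra.
From mathcomp Require Import lra.
Import Order.TTheory GRing.Theory Num.Theory.
Local Open Scope ring_scope.

Section H.
Variables (R : realFieldType) (V : finType) (e : rel V) (w : V -> V -> R).

Lemma gamma_ge S M : is_matching e S M -> matching_weight w M <= gamma e w S.
Proof. by move=> HM; rewrite /gamma; apply: (le_bigmax_cond _ _ HM). Qed.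

Lemma gamma_ge0 S : 0 <= gamma e w S.
Proof.
have H0 : is_matching e S set0.
  by apply/andP; split; apply/forall_inP => p; rewrite in_set0.
by have := @gamma_ge S set0 H0; rewrite /matching_weight big_set0.
Qed.

Lemma gamma_edge (S : {set V}) a b : a \in S -> b \in S -> e a b -> w a b <= gamma e w S.
Proof.
move=> aS bS eab.
have -> : w a b = matching_weight w [set (a, b)] by rewrite /matching_weight big_set1.
apply: gamma_ge; apply/andP; split; apply/forall_inP => p; rewrite in_set1 => /eqP -> /=.
  by rewrite aS bS eab.
by apply/forall_inP => q; rewrite in_set1 => /eqP ->; rewrite eqxx.
Qed.

Lemma gamma3 a b c : simple_graph e -> (forall x y, w x y = w y x) ->
  uniq [:: a; b; c] -> ~~ e a c -> 0 <= w a b ->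
  gamma e w [set a; b; c] <= Num.max (w a b) (w b c).
Proof.
move=> [irr sym] wsym uabc nac wab.
have m0 : 0 <= Num.max (w a b) (w b c) by rewrite le_max wab.
rewrite /gamma; apply/bigmax_leP; split => // M /andP[/forall_inP HS /forall_inP HD].
have [->|[p pM]] := set_0Vmem M; first by rewrite /matching_weight big_set0.
have HMp : M = [set p].
  apply/eqP; rewrite eq_sym eqEsubset sub1set pM /=; apply/subsetP => q qM.
  rewrite in_set1; apply/negPn/negP => nqp.
  have := HD q qM; move/forall_inP/(_ p pM); rewrite nqp /= => dis.
  have /and3P[q1 q2 eq12] := HS q qM.
  have /and3P[p1 p2 ep12] := HS p pM.
  have nq : q.1 != q.2 by apply: contraNneq (irr q.1) => h; rewrite {2}h.
  have np : p.1 != p.2 by apply: contraNneq (irr p.1) => h; rewrite {2}h.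
  have : (#|[set q.1; q.2] :|: [set p.1; p.2]| <= #|[set a; b; c]|)%N.
    apply: subset_leq_card; apply/subsetP => z; rewrite in_setU !in_set2 => /orP[/orP[]|/orP[]] /eqP ->; assumption.
  rewrite cardsU (disjoint_setI0 dis) cards0 subn0 !cards2 nq np.
  have : (#|[set a; b; c]| <= 3)%N by apply: leq_trans (leq_card_setU _ _) _; rewrite cards1 addn1 ltnS; apply: leq_trans (leq_card_setU _ _) _; rewrite !cards1.
  by move=> h1 h2; have := leq_trans h2 h1.
rewrite HMp /matching_weight big_set1.
have /and3P[] := HS p pM; rewrite !inE.
move: uabc; rewrite /= !inE negb_or => /and3P[/andP[nab nac'] nbc _].
case: p {pM HMp} => x y /=.
move=> /orP[/orP[]|] /eqP -> /orP[/orP[]|] /eqP ->; rewrite ?irr //.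
all: move=> h; rewrite ?(wsym b a) ?(wsym c b) ?le_max ?lexx ?orbT //.
all: by move: h; rewrite ?(sym c a) ?(negbTE nac) ?(negbTE (irr _)).
Qed.


Lemma sum2 (f : V -> R) a b : a != b -> \sum_(i in [set a; b]) f i = f a + f b.
Proof. by move=> nab; rewrite big_setU1 ?big_set1 ?in_set1. Qed.

Lemma sum3 (f : V -> R) a b c : uniq [:: a; b; c] ->
  \sum_(i in [set a; b; c]) f i = f a + f b + f c.
Proof.
rewrite /= !inE negb_or => /and3P[/andP[nab nac] nbc _].
rewrite -setUA big_setU1 ?sum2 /=; first by rewrite addrA.
all: by rewrite ?nbc // !inE negb_or nab nac.
Qed.
End H.


Theorem mainTheorem5 (R : realFieldType) (V : finType) (e : rel V)
  (w : V -> V -> R) (v1 v2 v3 v4 : V) :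
  simple_graph e -> edge_weights e w ->
  uniq [:: v1; v2; v3; v4] ->
  e v1 v2 -> e v2 v3 -> e v3 v4 ->
  ~~ e v1 v3 -> ~~ e v1 v4 -> ~~ e v2 v4 ->
  population_monotonic e w ->
  w v1 v2 + w v3 v4 <= w v2 v3.
Proof.
move=> sg [wsym wpos] u e12 e23 e34 n13 n14 n24 [x [eff mon]].
have := u; rewrite /= !inE !negb_or => /and4P[/and3P[d12 d13 d14] /andP[d23 d24] d34 _].
have u123 : uniq [:: v1; v2; v3] by rewrite /= !inE negb_or d12 d13 d23.
have u234 : uniq [:: v2; v3; v4] by rewrite /= !inE negb_or d23 d24 d34.
have p12 := wpos _ _ e12; have p23 := wpos _ _ e23; have p34 := wpos _ _ e34.
have ne2 : forall a b : V, [set a; b] != set0.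
  by move=> a b; apply/set0Pn; exists a; rewrite !inE eqxx.
have ne3 : forall a b c : V, [set a; b; c] != set0.
  by move=> a b c; apply/set0Pn; exists a; rewrite !inE eqxx.
have E12 := eff _ (ne2 v1 v2); rewrite sum2 // in E12.
have E23 := eff _ (ne2 v2 v3); rewrite sum2 // in E23.
have E34 := eff _ (ne2 v3 v4); rewrite sum2 // in E34.
have E123 := eff _ (ne3 v1 v2 v3); rewrite sum3 // in E123.
have E234 := eff _ (ne3 v2 v3 v4); rewrite sum3 // in E234.
have G12 : w v1 v2 <= gamma e w [set v1; v2] by apply: gamma_edge; rewrite // !inE eqxx ?orbT.
have G23 : w v2 v3 <= gamma e w [set v2; v3] by apply: gamma_edge; rewrite // !inE eqxx ?orbT.
have G34 : w v3 v4 <= gamma e w [set v3; v4] by apply: gamma_edge; rewrite // !inE eqxx ?orbT.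
have G123 := @gamma3 R V e w _ _ _ sg wsym u123 n13 (ltW p12).
have G234 := @gamma3 R V e w _ _ _ sg wsym u234 n24 (ltW p23).
have sA : [set v1; v2] \subset [set v1; v2; v3].
  by apply/subsetP => z; rewrite !inE => /orP[] ->; rewrite ?orbT.
have sB : [set v2; v3] \subset [set v1; v2; v3].
  by apply/subsetP => z; rewrite !inE => /orP[] ->; rewrite ?orbT.
have sC : [set v2; v3] \subset [set v2; v3; v4].
  by apply/subsetP => z; rewrite !inE => /orP[] ->; rewrite ?orbT.
have sD : [set v3; v4] \subset [set v2; v3; v4].
  by apply/subsetP => z; rewrite !inE => /orP[] ->; rewrite ?orbT.
have m1 := mon _ _ v1 (ne2 _ _) sA; have m2 := mon _ _ v2 (ne2 _ _) sA.
have m3 := mon _ _ v3 (ne2 _ _) sB.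
have n2 := mon _ _ v2 (ne2 _ _) sC.
have n3 := mon _ _ v3 (ne2 _ _) sD; have n4 := mon _ _ v4 (ne2 _ _) sD.
have i1 : v1 \in [set v1; v2] by rewrite !inE eqxx.
have i2 : v2 \in [set v1; v2] by rewrite !inE eqxx ?orbT.
have i2' : v2 \in [set v2; v3] by rewrite !inE eqxx.
have i3 : v3 \in [set v2; v3] by rewrite !inE eqxx ?orbT.
have i3' : v3 \in [set v3; v4] by rewrite !inE eqxx.
have i4 : v4 \in [set v3; v4] by rewrite !inE eqxx ?orbT.
have {}m1 := m1 i1; have {}m2 := m2 i2; have {}m3 := m3 i3.
have {}n2 := n2 i2'; have {}n3 := n3 i3'; have {}n4 := n4 i4.
have K1 : forall t, w v1 v2 <= t -> w v2 v3 <= t -> gamma e w [set v1; v2; v3] <= t.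
  by move=> t a b; apply: le_trans G123 _; rewrite ge_max a b.
have K2 : forall t, w v2 v3 <= t -> w v3 v4 <= t -> gamma e w [set v2; v3; v4] <= t.
  by move=> t a b; apply: le_trans G234 _; rewrite ge_max a b.
case: (lerP (w v1 v2) (w v2 v3)) => h1; case: (lerP (w v3 v4) (w v2 v3)) => h2.
- have G1 := K1 _ h1 (lexx _); have G2 := K2 _ (lexx _) h2; lra.
- have G1 := K1 _ h1 (lexx _); have G2 := K2 _ (ltW h2) (lexx _); lra.
- have G1 := K1 _ (lexx _) (ltW h1); have G2 := K2 _ (lexx _) h2; lra.
- have G1 := K1 _ (lexx _) (ltW h1); have G2 := K2 _ (ltW h2) (lexx _); lra.
Qed.
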